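(* Let $U\subset\mathbb{R}^n$ be a bounded domain with smooth boundary and let $(u_1,u_2)\in C(\overline U)^2$ be a viscosity solution of the system (S) in $U$. Then $u_1$ and $u_2$ are locally Lipschitz continuous in $U$.
   Context: For $\varphi\in C^2$ near $x$, set $\Delta_\infty\varphi(x)=|D\varphi(x)|^{-2}\sum_{k,l=1}^n\varphi_{x_k}\varphi_{x_l}\varphi_{x_kx_l}(x)$ when $D\varphi(x)\neq0$. Define $\Delta_\infty^+\varphi(x)=\Delta_\infty\varphi(x)$ if $D\varphi(x)\ne0$ and $\Delta_\infty^+\varphi(x)=\max\{D^2\varphi(x)v\cdot v: v\in\mathbb{S}^{n-1}\}$ if $D\varphi(x)=0$; define $\Delta_\infty^-\varphi(x)$ in the same way with $\min$ in place of $\max$. The system (S) on an open set $\Omega$ is: $-\Delta_\infty u_1+u_1-u_2=0$ and $-\Delta_\infty u_2+u_2-u_1=0$ in $\Omega$. A pair $(u_1,u_2)$ of upper semicontinuous functions on $\Omega$ is a viscosity subsolution of (S) in $\Omega$ if for each $i\in\{1,2\}$, $j=3-i$, and each $\varphi\in C^2(\Omega)$ such that $u_i-\varphi$ has a local maximum at $x_0\in\Omega$, one has $-\Delta_\infty^+\varphi(x_0)+u_i(x_0)-u_j(x_0)\le0$. A pair of lower semicontinuous functions on $\Omega$ is a viscosity supersolution if for each $i$, $j=3-i$, and each $\varphi\in C^2(\Omega)$ such that $u_i-\varphi$ has a local minimum at $x_0\in\Omega$, one has $-\Delta_\infty^-\varphi(x_0)+u_i(x_0)-u_j(x_0)\ge0$.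 A viscosity solution is a pair that is both a subsolution and a supersolution. *)

(* Defs.v *)
From mathcomp Require Import ssreflect ssrfun ssrbool eqtype ssrnat seq fintype bigop.
From Stdlib Require Import Reals.
Set Implicit Arguments. Unset Strict Implicit. Unset Printing Implicit Defensive.
Local Open Scope R_scope.

Definition point (n : nat) := 'I_n -> R.

Definition vadd n (x y : point n) : point n := fun i => x i + y i.
Definition vsub n (x y : point n) : point n := fun i => x i - y i.
Definition vscale n (t : R) (x : point n) : point n := fun i => t * x i.
Definition ebasis n (i : 'I_n) : point n := fun j => if j == i then 1 else 0.
Definition dot n (x y : point n) : R := \big[Rplus/0]_(i < n) (x i * y i).
Definition vnorm n (x : point n) : R := sqrt (dot x x).
Definition dist n (x y : point n) : R := vnorm (vsub x y).
Definition ball n (x0 : point n) (r : R) : point n -> Prop := fun y => dist y x0 < r.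

Definition is_open n (O : point n -> Prop) : Prop :=
  forall x, O x -> exists r, 0 < r /\ forall y, ball x r y -> O y.
Definition is_connected n (U : point n -> Prop) : Prop :=
  forall A B : point n -> Prop, is_open A -> is_open B ->
    (forall x, U x -> A x \/ B x) -> (forall x, U x -> ~ (A x /\ B x)) ->
    (forall x, U x -> A x) \/ (forall x, U x -> B x).
Definition is_domain n (U : point n -> Prop) : Prop :=
  (exists x, U x) /\ is_open U /\ is_connected U.
Definition is_bounded n (U : point n -> Prop) : Prop :=
  exists M, forall x, U x -> vnorm x <= M.
Definition closure n (U : point n -> Prop) : point n -> Prop :=
  fun x => forall r, 0 < r -> exists y, U y /\ dist y x < r.
Definition boundary n (U : point n -> Prop) : point n -> Prop :=
  fun x => closure U x /\ ~ U x.

Definition continuous_on n (S : point n -> Prop) (f : point n -> R) : Prop :=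
  forall x, S x -> forall eps, 0 < eps -> exists delta, 0 < delta /\
    forall y, S y -> dist y x < delta -> Rabs (f y - f x) < eps.
Definition usc_on n (S : point n -> Prop) (f : point n -> R) : Prop :=
  forall x, S x -> forall eps, 0 < eps -> exists delta, 0 < delta /\
    forall y, S y -> dist y x < delta -> f y < f x + eps.
Definition lsc_on n (S : point n -> Prop) (f : point n -> R) : Prop :=
  forall x, S x -> forall eps, 0 < eps -> exists delta, 0 < delta /\
    forall y, S y -> dist y x < delta -> f x - eps < f y.

Definition partial n (f : point n -> R) (i : 'I_n) (x : point n) (l : R) : Prop :=
  derivable_pt_lim (fun t => f (vadd x (vscale t (ebasis i)))) 0 l.

Fixpoint Ck n (k : nat) (O : point n -> Prop) (f : point n -> R) : Prop :=
  match k with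
  | O => continuous_on O f
  | S k' => continuous_on O f /\
      forall i : 'I_n, exists g : point n -> R,
        (forall x, O x -> partial f i x (g x)) /\ Ck k' O g
  end.

Definition C2_with n (O : point n -> Prop) (phi : point n -> R)
  (grad : 'I_n -> point n -> R) (hess : 'I_n -> 'I_n -> point n -> R) : Prop :=
  continuous_on O phi /\
  (forall i x, O x -> partial phi i x (grad i x)) /\
  (forall i, continuous_on O (grad i)) /\
  (forall k l x, O x -> partial (grad k) l x (hess k l x)) /\
  (forall k l, continuous_on O (hess k l)).

Definition smooth_boundary n (U : point n -> Prop) : Prop :=
  forall x0, boundary U x0 ->
    exists r, 0 < r /\ exists psi : point n -> R,
      (forall k, Ck k (ball x0 r) psi) /\
      (exists i l, partial psi i x0 l /\ l <> 0) /\
      (forall y, ball x0 r y -> (U y <-> psi y < 0)).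

Definition gradv n (grad : 'I_n -> point n -> R) (x : point n) : point n :=
  fun i => grad i x.
Definition quadH n (hess : 'I_n -> 'I_n -> point n -> R) (x v : point n) : R :=
  \big[Rplus/0]_(k < n) \big[Rplus/0]_(l < n) (hess k l x * v k * v l).

Definition is_max_quad n hess (x : point n) (m : R) : Prop :=
  (exists v, vnorm v = 1 /\ quadH hess x v = m) /\
  (forall v, vnorm v = 1 -> quadH hess x v <= m).
Definition is_min_quad n hess (x : point n) (m : R) : Prop :=
  (exists v, vnorm v = 1 /\ quadH hess x v = m) /\
  (forall v, vnorm v = 1 -> m <= quadH hess x v).

(* infinity Laplacian for D phi(x) <> 0 *)
Definition inf_lap n grad hess (x : point n) : R :=
  / (vnorm (gradv grad x))^2 * quadH hess x (gradv grad x).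

Definition inf_lap_plus n grad hess (x : point n) (m : R) : Prop :=
  (gradv grad x <> (fun _ => 0) /\ m = inf_lap grad hess x) \/
  (gradv grad x = (fun _ => 0) /\ is_max_quad hess x m).
Definition inf_lap_minus n grad hess (x : point n) (m : R) : Prop :=
  (gradv grad x <> (fun _ => 0) /\ m = inf_lap grad hess x) \/
  (gradv grad x = (fun _ => 0) /\ is_min_quad hess x m).

Definition other (i : bool) : bool := negb i.

Definition visc_sub n (O : point n -> Prop) (u : bool -> point n -> R) : Prop :=
  (forall i, usc_on O (u i)) /\
  forall (i : bool) phi grad hess x0, C2_with O phi grad hess -> O x0 ->
    (exists r, 0 < r /\ forall y, O y -> dist y x0 < r ->
        u i y - phi y <= u i x0 - phi x0) ->
    forall m, inf_lap_plus grad hess x0 m ->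
      - m + u i x0 - u (other i) x0 <= 0.

Definition visc_super n (O : point n -> Prop) (u : bool -> point n -> R) : Prop :=
  (forall i, lsc_on O (u i)) /\
  forall (i : bool) phi grad hess x0, C2_with O phi grad hess -> O x0 ->
    (exists r, 0 < r /\ forall y, O y -> dist y x0 < r ->
        u i x0 - phi x0 <= u i y - phi y) ->
    forall m, inf_lap_minus grad hess x0 m ->
      0 <= - m + u i x0 - u (other i) x0.

Definition visc_solution n (O : point n -> Prop) (u : bool -> point n -> R) : Prop :=
  visc_sub O u /\ visc_super O u.

Definition pair_fun n (u1 u2 : point n -> R) : bool -> point n -> R :=
  fun b => if b then u1 else u2.

Definition locally_lipschitz n (U : point n -> Prop) (f : point n -> R) : Prop :=
  forall x, U x -> exists r L, 0 < r /\
    forall y z, U y -> U z -> ball x r y -> ball x r z ->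
      Rabs (f y - f z) <= L * dist y z.

(* Main.v *)
Require Import Defs.
From mathcomp Require Import ssreflect ssrfun ssrbool eqtype ssrnat seq fintype bigop.
From Stdlib Require Import Reals Lra Lia FunctionalExtensionality.
From mathcomp Require Import Rstruct.
Import Defs.
Set Implicit Arguments. Unset Strict Implicit.
Local Open Scope R_scope.

Section V.
Variable n : nat.
Implicit Types x y z w : point n.

Lemma dot_ge0 x : 0 <= dot x x.
Proof.
rewrite /dot; apply: (big_ind (fun r => 0 <= r)); [lra| move=> a b; lra|].
move=> i _; nra.
Qed.

Lemma dot_comm x y : dot x y = dot y x.
Proof. rewrite /dot; apply: eq_bigr => i _; ring. Qed.

Lemma dot_addl x y w : dot (vadd x y) w = dot x w + dot y w.
Proof. rewrite /dot -big_split; apply: eq_bigr => i _ /=; rewrite /vadd; ring. Qed.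

Lemma dot_scalel t x w : dot (vscale t x) w = t * dot x w.
Proof. rewrite /dot big_distrr; apply: eq_bigr => i _ /=; rewrite /vscale; ring. Qed.

Lemma dot_quad x y t : dot (vadd x (vscale t y)) (vadd x (vscale t y)) =
  dot x x + 2 * t * dot x y + t ^ 2 * dot y y.
Proof.
rewrite dot_addl dot_scalel (dot_comm x) (dot_comm y) !dot_addl !dot_scalel.
rewrite (dot_comm y x); ring.
Qed.

Lemma cauchy_schwarz x y : (dot x y) ^ 2 <= dot x x * dot y y.
Proof.
set X := dot x x; set Y := dot y y; set P := dot x y.
have H t : 0 <= X + 2 * t * P + t ^ 2 * Y by rewrite /X /Y /P -dot_quad; exact: dot_ge0.
have HY : 0 <= Y by apply: dot_ge0.
have HX : 0 <= X by apply: dot_ge0.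
case: (Req_dec Y 0) => HY0.
- case: (Req_dec P 0) => HP0.
  + rewrite HP0 HY0; lra.
  + have := H (- (X + 1) / (2 * P)).
    have -> : X + 2 * (- (X + 1) / (2 * P)) * P + (- (X + 1) / (2 * P)) ^ 2 * Y = -1.
      rewrite HY0; field; auto.
    lra.
- have HYp : 0 < Y by lra.
  have := H (- P / Y).
  have -> : X + 2 * (- P / Y) * P + (- P / Y) ^ 2 * Y = (X * Y - P ^ 2) / Y by field; lra.
  move=> h.
  have : 0 <= (X * Y - P ^ 2) / Y * Y by nra.
  have -> : (X * Y - P ^ 2) / Y * Y = X * Y - P ^ 2 by field; lra.
  lra.
Qed.

Lemma vnorm_ge0 x : 0 <= vnorm x.
Proof. exact: sqrt_pos. Qed.

Lemma vnorm_triangle x y : vnorm (vadd x y) <= vnorm x + vnorm y.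
Proof.
rewrite /vnorm.
have e : vadd x y = vadd x (vscale 1 y).
  by apply: functional_extensionality => i; rewrite /vadd /vscale; ring.
rewrite e dot_quad.
have HA := dot_ge0 x; have HB := dot_ge0 y; have CS := cauchy_schwarz x y.
have sA := sqrt_sqrt _ HA; have sB := sqrt_sqrt _ HB.
have pA := sqrt_pos (dot x x); have pB := sqrt_pos (dot y y).
have hP : dot x y <= sqrt (dot x x) * sqrt (dot y y).
  apply: Rnot_lt_le => hc.
  have h0 : 0 <= sqrt (dot x x) * sqrt (dot y y) by nra.
  have e2 : (sqrt (dot x x) * sqrt (dot y y)) ^ 2 = dot x x * dot y y.
    rewrite -[in RHS]sA -[in RHS]sB /=; ring.
  nra.
rewrite -[X in _ <= X]sqrt_pow2; last lra.
apply: sqrt_le_1_alt.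
have e3 : (sqrt (dot x x) + sqrt (dot y y)) ^ 2 =
  sqrt (dot x x) * sqrt (dot x x) + 2 * (sqrt (dot x x) * sqrt (dot y y)) + sqrt (dot y y) * sqrt (dot y y) by ring.
rewrite e3 sA sB; lra.
Qed.

Lemma coord_le x i : (x i) ^ 2 <= dot x x.
Proof.
rewrite /dot (bigD1 i) //=.
set S := \big[_/_]_(_ < _ | _) _.
have : 0 <= S.
  apply: (big_ind (fun r => 0 <= r)); [lra| move=> a b; lra|] => j _; nra.
lra.
Qed.

Lemma coord_dist x y i : Rabs (x i - y i) <= dist x y.
Proof.
rewrite /dist /vnorm.
have h := coord_le (vsub x y) i. rewrite /vsub in h *.
rewrite -sqrt_Rsqr_abs; apply: sqrt_le_1_alt; rewrite /Rsqr; lra.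
Qed.

Lemma vsub_add x y z : vsub x z = vadd (vsub x y) (vsub y z).
Proof. by apply: functional_extensionality => i; rewrite /vadd /vsub; ring. Qed.

Lemma pdist_triangle x y z : dist x z <= dist x y + dist y z.
Proof. rewrite /dist (vsub_add x y z); exact: vnorm_triangle. Qed.

Lemma pdist_sym x y : dist x y = dist y x.
Proof.
rewrite /dist /vnorm /dot; congr sqrt; apply: eq_bigr => i _; rewrite /vsub; ring.
Qed.

Lemma pdist_refl x : dist x x = 0.
Proof.
rewrite /dist /vnorm /dot big1 ?sqrt_0 // => i _; rewrite /vsub; ring.
Qed.

Lemma pdist_ge0 x y : 0 <= dist x y.
Proof. exact: sqrt_pos. Qed.
End V.

Definition rcont (g : R -> R) (x : R) : Prop :=
  forall eps, 0 < eps -> exists d, 0 < d /\ forall t, Rabs (t - x) < d -> Rabs (g t - g x) < eps.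

Lemma rcont_of_pt g x : continuity_pt g x -> rcont g x.
Proof.
move=> H eps He; have [alp [Ha Hb]] := H eps He.
exists alp; split => // t Ht.
case: (Req_dec t x) => [->|tx]; first by rewrite Rminus_diag Rabs_R0.
exact: (Hb t (conj (conj I (nesym tx)) Ht)).
Qed.

Lemma rcont_of_deriv g x l : derivable_pt_lim g x l -> rcont g x.
Proof.
move=> H; apply: rcont_of_pt; apply: derivable_continuous_pt; exists l; exact: H.
Qed.

Definition cont_at n (f : point n -> R) x := forall eps, 0 < eps -> exists d, 0 < d /\
  forall y, dist y x < d -> Rabs (f y - f x) < eps.

Lemma cont_on n (O : point n -> Prop) f : (forall x, cont_at f x) -> continuous_on O f.
Proof.
move=> H x _ eps He; have [d [Hd Hy]] := H x eps He; exists d; split => // y _; exact: Hy.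
Qed.

Lemma cont_const n c x : cont_at (fun _ : point n => c) x.
Proof. move=> eps He; exists 1; split; [lra|] => y _; rewrite Rminus_diag Rabs_R0; lra. Qed.

Lemma cont_coord n (i : 'I_n) x : cont_at (fun y => y i) x.
Proof.
move=> eps He; exists eps; split => // y Hy; apply: Rle_lt_trans (coord_dist _ _ _) Hy.
Qed.

Lemma cont_comp n (f : point n -> R) g x : cont_at f x -> rcont g (f x) -> cont_at (fun y => g (f y)) x.
Proof.
move=> Hf Hg eps He; have [d1 [Hd1 H1]] := Hg eps He.
have [d2 [Hd2 H2]] := Hf d1 Hd1; exists d2; split => // y Hy; exact: H1 (H2 y Hy).
Qed.

Lemma cont_plus n (f g : point n -> R) x : cont_at f x -> cont_at g x -> cont_at (fun y => f y + g y) x.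
Proof.
move=> Hf Hg eps He.
have [d1 [Hd1 H1]] := Hf (eps/2) ltac:(lra); have [d2 [Hd2 H2]] := Hg (eps/2) ltac:(lra).
exists (Rmin d1 d2); split; first by apply: Rmin_glb_lt.
move=> y Hy; have := H1 y (Rlt_le_trans _ _ _ Hy (Rmin_l _ _)).
have := H2 y (Rlt_le_trans _ _ _ Hy (Rmin_r _ _)).
move=> a b; have e : f y + g y - (f x + g x) = (f y - f x) + (g y - g x) by ring.
rewrite e; apply: Rle_lt_trans (Rabs_triang _ _) _; lra.
Qed.

Lemma rcont_poly (a b c : R) t : rcont (fun s => a * s * s + b * s + c) t.
Proof.
apply: (@rcont_of_deriv _ _ (2 * a * t + b)).
have e : (fun s => a * s * s + b * s + c) = plus_fct (fun s => a * (s * s)) (fun s => b * s + c).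
  by apply: functional_extensionality => s; rewrite /plus_fct; ring.
rewrite e; have -> : 2 * a * t + b = a * (1 * t + t * 1) + (b * 1 + 0) by ring.
apply: derivable_pt_lim_plus.
  apply: (derivable_pt_lim_scal (fun s => s * s)).
  apply: (derivable_pt_lim_mult id id); exact: derivable_pt_lim_id.
apply: (derivable_pt_lim_plus (fun s => b * s) (fun _ => c)).
  apply: (derivable_pt_lim_scal id); exact: derivable_pt_lim_id.
exact: derivable_pt_lim_const.
Qed.

Lemma cont_scal n (f : point n -> R) a x : cont_at f x -> cont_at (fun y => a * f y) x.
Proof.
move=> Hf; have := @cont_comp n f (fun s => 0 * s * s + a * s + 0) x Hf (rcont_poly _ _ _ _).
move=> H eps He; have [d [Hd Hy]] := H eps He; exists d; split => // y Hdy.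
have := Hy y Hdy; have -> : 0 * f y * f y + a * f y + 0 - (0 * f x * f x + a * f x + 0) = a * f y - a * f x by ring.
done.
Qed.

Lemma cont_sqr n (f : point n -> R) x : cont_at f x -> cont_at (fun y => f y * f y) x.
Proof.
move=> Hf; have := @cont_comp n f (fun s => 1 * s * s + 0 * s + 0) x Hf (rcont_poly _ _ _ _).
move=> H eps He; have [d [Hd Hy]] := H eps He; exists d; split => // y Hdy.
have := Hy y Hdy; have -> : 1 * f y * f y + 0 * f y + 0 - (1 * f x * f x + 0 * f x + 0) = f y * f y - f x * f x by ring.
done.
Qed.

Lemma cont_ext n (f g : point n -> R) x : (forall y, f y = g y) -> cont_at f x -> cont_at g x.
Proof.
move=> e H eps He; have [d [Hd Hy]] := H eps He; exists d; split => // y Hdy; rewrite -!e; exact: Hy.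
Qed.

Lemma cont_mult n (f g : point n -> R) x : cont_at f x -> cont_at g x -> cont_at (fun y => f y * g y) x.
Proof.
move=> Hf Hg.
apply: (@cont_ext n (fun y => /4 * ((f y + g y) * (f y + g y)) + (-/4) * ((f y + -1 * g y) * (f y + -1 * g y)))).
  by move=> y; field.
apply: cont_plus; apply: cont_scal; apply: cont_sqr; apply: cont_plus => //; exact: cont_scal.
Qed.

Lemma cont_dist n (z x : point n) : cont_at (fun y => dist y z) x.
Proof.
move=> eps He; exists eps; split => // y Hy.
have h1 := pdist_triangle y x z; have h2 := pdist_triangle x y z.
rewrite (pdist_sym x y) in h2.
apply: Rabs_def1; lra.
Qed.

Lemma deriv_ext f g x l l' : (forall t, f t = g t) -> l = l' ->
  derivable_pt_lim f x l -> derivable_pt_lim g x l'.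
Proof.
move=> e <-; have -> : g = f by apply: functional_extensionality => t; rewrite e.
done.
Qed.

Lemma deriv_local f g s l r : 0 < r -> (forall t, Rabs (t - s) < r -> f t = g t) ->
  derivable_pt_lim g s l -> derivable_pt_lim f s l.
Proof.
move=> Hr e H eps He; have [dl Hd] := H eps He.
have hp : 0 < Rmin dl r by apply: Rmin_glb_lt => //; exact: cond_pos.
exists (mkposreal _ hp) => h h0 hh /=.
have hh1 : Rabs h < dl := Rlt_le_trans _ _ _ hh (Rmin_l _ _).
have hh2 : Rabs h < r := Rlt_le_trans _ _ _ hh (Rmin_r _ _).
rewrite !e; first exact: Hd.
- by rewrite Rminus_diag Rabs_R0.
- by have -> : s + h - s = h by ring.
Qed.

Definition pw (d : R) (h1 h2 : R -> R) (t : R) := if Rle_dec d t then h2 t else h1 t.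

Lemma deriv_pw d h1 h2 s l :
  (s < d -> derivable_pt_lim h1 s l) -> (d < s -> derivable_pt_lim h2 s l) ->
  (s = d -> derivable_pt_lim h1 d l /\ derivable_pt_lim h2 d l /\ h1 d = h2 d) ->
  derivable_pt_lim (pw d h1 h2) s l.
Proof.
move=> H1 H2 H3.
case: (Rtotal_order s d) => [sd|[sd|sd]].
- apply: (@deriv_local _ h1 _ _ (d - s)); [lra| |exact: H1].
  move=> t Ht; rewrite /pw; case: Rle_dec => // Hdt.
  have := Rle_abs (t - s); lra.
- subst s; have [D1 [D2 E]] := H3 erefl.
  move=> eps He; have [a Ha] := D1 eps He; have [b Hb] := D2 eps He.
  have hp : 0 < Rmin a b by apply: Rmin_glb_lt; exact: cond_pos.
  exists (mkposreal _ hp) => h h0 hh /=.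
  have hh1 : Rabs h < a := Rlt_le_trans _ _ _ hh (Rmin_l _ _).
  have hh2 : Rabs h < b := Rlt_le_trans _ _ _ hh (Rmin_r _ _).
  rewrite /pw; destruct (Rle_dec d d) as [rr|nd]; last lra.
  destruct (Rle_dec d (d + h)); first exact: Hb.
  rewrite -E; exact: Ha.
- apply: (@deriv_local _ h2 _ _ (s - d)); [lra| |exact: H2].
  move=> t Ht; rewrite /pw; case: Rle_dec => // Hdt.
  have := Rle_abs (s - t); rewrite -Rabs_Ropp in Ht.
  have e : - (t - s) = s - t by ring.
  rewrite e in Ht; lra.
Qed.

Lemma rcont_pw d h1 h2 s :
  (s < d -> rcont h1 s) -> (d < s -> rcont h2 s) ->
  (s = d -> rcont h1 d /\ rcont h2 d /\ h1 d = h2 d) ->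
  rcont (pw d h1 h2) s.
Proof.
move=> H1 H2 H3 eps He.
case: (Rtotal_order s d) => [sd|[sd|sd]].
- have [a [Ha Hb]] := H1 sd eps He.
  exists (Rmin a (d - s)); split; first by apply: Rmin_glb_lt; lra.
  move=> t Ht; have t1 := Rlt_le_trans _ _ _ Ht (Rmin_l _ _).
  have t2 := Rlt_le_trans _ _ _ Ht (Rmin_r _ _).
  have := Rle_abs (t - s).
  rewrite /pw; case: Rle_dec => ?; first lra.
  case: Rle_dec => ?; first lra. move=> _; exact: Hb.
- subst s; have [C1 [C2 E]] := H3 erefl.
  have [a [Ha Hb]] := C1 eps He; have [b [Hb0 Hb1]] := C2 eps He.
  exists (Rmin a b); split; first by apply: Rmin_glb_lt.
  move=> t Ht; have t1 := Rlt_le_trans _ _ _ Ht (Rmin_l _ _).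
  have t2 := Rlt_le_trans _ _ _ Ht (Rmin_r _ _).
  rewrite /pw; destruct (Rle_dec d d) as [rr|nd]; last lra.
  destruct (Rle_dec d t); first exact: Hb1.
  rewrite -E; exact: Hb.
- have [a [Ha Hb]] := H2 sd eps He.
  exists (Rmin a (s - d)); split; first by apply: Rmin_glb_lt; lra.
  move=> t Ht; have t1 := Rlt_le_trans _ _ _ Ht (Rmin_l _ _).
  have t2 := Rlt_le_trans _ _ _ Ht (Rmin_r _ _).
  have := Rle_abs (s - t); rewrite -Rabs_Ropp in t2.
  have e : - (t - s) = s - t by ring.
  rewrite e in t2.
  rewrite /pw; case: Rle_dec => ?; last lra.
  case: Rle_dec => ?; last lra. move=> _; exact: Hb.
Qed.

Lemma deriv_poly (A B C : R) t : derivable_pt_lim (fun s => A * s * s + B * s + C) t (2 * A * t + B).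
Proof.
have e : (fun s => A * s * s + B * s + C) = plus_fct (fun s => A * (s * s)) (fun s => B * s + C).
  by apply: functional_extensionality => s; rewrite /plus_fct; ring.
rewrite e; have -> : 2 * A * t + B = A * (1 * t + t * 1) + (B * 1 + 0) by ring.
apply: derivable_pt_lim_plus.
  apply: (derivable_pt_lim_scal (fun s => s * s)).
  apply: (derivable_pt_lim_mult id id); exact: derivable_pt_lim_id.
apply: (derivable_pt_lim_plus (fun s => B * s) (fun _ => C)).
  apply: (derivable_pt_lim_scal id); exact: derivable_pt_lim_id.
exact: derivable_pt_lim_const.
Qed.

Definition Gl d s := sqrt d + (s - d) / (2 * sqrt d) - (s - d) * (s - d) / (8 * d * sqrt d).
Definition G1l d s := / (2 * sqrt d) - (s - d) / (4 * d * sqrt d).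
Definition G2l d (s : R) := - / (4 * d * sqrt d).
Definition G1r s := / (2 * sqrt s).
Definition G2r s := - / (4 * s * sqrt s).
Definition G d := pw d (Gl d) sqrt.
Definition G1 d := pw d (G1l d) G1r.
Definition G2 d := pw d (G2l d) G2r.

Lemma pw_l d h1 h2 s : s < d -> pw d h1 h2 s = h1 s.
Proof. by rewrite /pw; case: Rle_dec => // ?; lra. Qed.
Lemma pw_r d h1 h2 s : d <= s -> pw d h1 h2 s = h2 s.
Proof. by rewrite /pw; case: Rle_dec. Qed.

Section GS.
Variable d : R.
Hypothesis dpos : 0 < d.

Let sdpos : 0 < sqrt d. Proof. exact: sqrt_lt_R0. Qed.

Lemma deriv_Gl s : derivable_pt_lim (Gl d) s (G1l d s).
Proof.
have sd0 : sqrt d <> 0 by lra.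
have H := deriv_poly (- / (8 * d * sqrt d)) (/ (2 * sqrt d) + 2 * d / (8 * d * sqrt d))
   (sqrt d - d / (2 * sqrt d) - d * d / (8 * d * sqrt d)) s.
apply: (deriv_ext _ _ H).
- move=> t; rewrite /Gl /=; field; lra.
- rewrite /G1l; field; lra.
Qed.

Lemma deriv_G1l s : derivable_pt_lim (G1l d) s (G2l d s).
Proof.
have sd0 : sqrt d <> 0 by lra.
have H := deriv_poly 0 (- / (4 * d * sqrt d)) (/ (2 * sqrt d) + d / (4 * d * sqrt d)) s.
apply: (deriv_ext _ _ H).
- move=> t; rewrite /G1l /=; field; lra.
- rewrite /G2l; field; lra.
Qed.

Lemma deriv_G1r s : 0 < s -> derivable_pt_lim G1r s (G2r s).
Proof.
move=> sp; have ss : 0 < sqrt s by exact: sqrt_lt_R0.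
have ne : mult_real_fct 2 sqrt s <> 0 by rewrite /mult_real_fct; lra.
have H := derivable_pt_lim_div (fct_cte 1) (mult_real_fct 2 sqrt) s _ _ (derivable_pt_lim_const 1 s)
  (derivable_pt_lim_scal sqrt 2 s _ (derivable_pt_lim_sqrt s sp)) ne.
apply: (deriv_ext _ _ H).
- by move=> t; rewrite /G1r /div_fct /fct_cte /mult_real_fct /Rdiv; ring.
- rewrite /G2r /fct_cte /mult_real_fct /Rsqr.
  have hs := sqrt_sqrt s (Rlt_le _ _ sp).
  set r := sqrt s in hs ss *. rewrite -hs. field; lra.
Qed.

Lemma rcont_G2r s : 0 < s -> rcont G2r s.
Proof.
move=> sp; apply: rcont_of_pt.
have -> : G2r = (- / ((fct_cte 4 * id) * sqrt))%F.
  by apply: functional_extensionality => t; rewrite /G2r /opp_fct /inv_fct /mult_fct /fct_cte.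
apply: continuity_pt_opp; apply: continuity_pt_inv.
- apply: continuity_pt_mult; last by apply: continuity_pt_sqrt; lra.
  apply: continuity_pt_mult; first by apply: continuity_pt_const.
  apply: derivable_continuous_pt; exact: derivable_pt_id.
- rewrite /mult_fct /fct_cte /id; have := sqrt_lt_R0 s sp; nra.
Qed.

Lemma deriv_G s : derivable_pt_lim (G d) s (G1 d s).
Proof.
have sd0 : sqrt d <> 0 by lra.
apply: deriv_pw.
- move=> h; rewrite /G1 pw_l //; exact: deriv_Gl.
- move=> h; rewrite /G1 pw_r; last lra; apply: derivable_pt_lim_sqrt; lra.
- move=> ->; rewrite /G1 pw_r; last lra.
  split; last split.
  + have -> : G1r d = G1l d d by rewrite /G1r /G1l; field; lra.
    exact: deriv_Gl.
  + exact: derivable_pt_lim_sqrt.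
  + rewrite /Gl; field; lra.
Qed.

Lemma deriv_G1 s : derivable_pt_lim (G1 d) s (G2 d s).
Proof.
have sd0 : sqrt d <> 0 by lra.
apply: deriv_pw.
- move=> h; rewrite /G2 pw_l //; exact: deriv_G1l.
- move=> h; rewrite /G2 pw_r; last lra; apply: deriv_G1r; lra.
- move=> ->; rewrite /G2 pw_r; last lra.
  split; last split.
  + have -> : G2r d = G2l d d by rewrite /G2r /G2l.
    exact: deriv_G1l.
  + exact: deriv_G1r.
  + rewrite /G1l /G1r; field; lra.
Qed.

Lemma rcont_G2 s : rcont (G2 d) s.
Proof.
apply: rcont_pw.
- move=> _; apply: (@rcont_of_deriv _ _ 0); rewrite /G2l.
  exact: (derivable_pt_lim_const (- / (4 * d * sqrt d)) s).
- move=> h; apply: rcont_G2r; lra.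
- move=> _; split; last split.
  + apply: (@rcont_of_deriv _ _ 0); rewrite /G2l.
    exact: (derivable_pt_lim_const (- / (4 * d * sqrt d)) d).
  + exact: rcont_G2r.
  + by rewrite /G2r /G2l.
Qed.
End GS.

Lemma sum_scal n c (f : 'I_n -> R) :
  \big[Rplus/0]_(i < n) (c * f i) = c * \big[Rplus/0]_(i < n) f i.
Proof. by rewrite big_distrr. Qed.

Lemma sum_split n (f g : 'I_n -> R) :
  \big[Rplus/0]_(i < n) (f i + g i) = \big[Rplus/0]_(i < n) f i + \big[Rplus/0]_(i < n) g i.
Proof. by rewrite big_split. Qed.

Lemma sum_ind n (k : 'I_n) (A : 'I_n -> R) :
  \big[Rplus/0]_(l < n) (if k == l then A l else 0) = A k.
Proof.
rewrite (bigD1 k) //= eqxx big1 => [|l /negbTE hl]; first ring.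
by rewrite eq_sym hl.
Qed.

Lemma dot_ebasis n (w : point n) i : dot w (ebasis i) = w i.
Proof.
rewrite /dot /ebasis (bigD1 i) //= eqxx big1 => [|j /negbTE ->]; ring.
Qed.

Lemma dot_ebasis2 n (i : 'I_n) : dot (ebasis i) (ebasis i) = 1.
Proof. by rewrite dot_ebasis /ebasis eqxx. Qed.

Section Radial.
Variable n : nat.
Variable z : point n.
Variables F F1 F2 : R -> R.
Hypothesis dF : forall s, derivable_pt_lim F s (F1 s).
Hypothesis dF1 : forall s, derivable_pt_lim F1 s (F2 s).
Hypothesis cF2 : forall s, rcont F2 s.

Definition sq (y : point n) := dot (vsub y z) (vsub y z).
Definition rphi (y : point n) := F (sq y).
Definition rgrad (k : 'I_n) (y : point n) := F1 (sq y) * (2 * (y k - z k)).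
Definition rhess (k l : 'I_n) (y : point n) :=
  F2 (sq y) * (2 * (y l - z l)) * (2 * (y k - z k)) + F1 (sq y) * (if k == l then 2 else 0).

Lemma sq_line x i t : sq (vadd x (vscale t (ebasis i))) = 1 * t * t + (2 * (x i - z i)) * t + sq x.
Proof.
have e : vsub (vadd x (vscale t (ebasis i))) z = vadd (vsub x z) (vscale t (ebasis i)).
  by apply: functional_extensionality => j; rewrite /vsub /vadd /vscale; ring.
rewrite /sq e dot_quad dot_ebasis dot_ebasis2 /vsub; ring.
Qed.

Lemma coord_line x i (k : 'I_n) t : vadd x (vscale t (ebasis i)) k - z k =
  (x k - z k) + (if k == i then 1 else 0) * t.
Proof. rewrite /vadd /vscale /ebasis; ring. Qed.

Lemma partial_comp_sq (H H' : R -> R) i x : (forall s, derivable_pt_lim H s (H' s)) ->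
  derivable_pt_lim (fun t => H (sq (vadd x (vscale t (ebasis i))))) 0 (H' (sq x) * (2 * (x i - z i))).
Proof.
move=> dH.
have P := deriv_poly 1 (2 * (x i - z i)) (sq x) 0.
have C := derivable_pt_lim_comp _ _ _ _ _ P (dH _).
apply: (deriv_ext _ _ C).
- by move=> t; rewrite /comp sq_line.
- have -> : 1 * 0 * 0 + 2 * (x i - z i) * 0 + sq x = sq x by ring. ring.
Qed.

Lemma partial_coord i (k : 'I_n) x :
  derivable_pt_lim (fun t => 2 * (vadd x (vscale t (ebasis i)) k - z k)) 0 (2 * (if k == i then 1 else 0)).
Proof.
have P := deriv_poly 0 (2 * (if k == i then 1 else 0)) (2 * (x k - z k)) 0.
apply: (deriv_ext _ _ P).
- by move=> t; rewrite coord_line; ring.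
- ring.
Qed.

Lemma rphi_partial i x : partial rphi i x (rgrad i x).
Proof. exact: partial_comp_sq. Qed.

Lemma rgrad_partial k l x : partial (rgrad k) l x (rhess k l x).
Proof.
have A := partial_comp_sq l x dF1.
have B := partial_coord l k x.
have M := derivable_pt_lim_mult _ _ _ _ _ A B.
rewrite /partial; apply: (deriv_ext _ _ M).
- by move=> t; rewrite /mult_fct /rgrad.
- rewrite /rhess /=.
  have -> : vadd x (vscale 0 (ebasis l)) = x.
    by apply: functional_extensionality => j; rewrite /vadd /vscale; ring.
  case: eqP => _; ring.
Qed.

Lemma cont_sq x : cont_at sq x.
Proof.
apply: (@cont_ext _ (fun y => dist y z * dist y z)).
  by move=> y; rewrite /dist /vnorm sqrt_sqrt //; exact: dot_ge0.
apply: cont_sqr; exact: cont_dist.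
Qed.

Lemma cont_Fsq (H H' : R -> R) x : (forall s, derivable_pt_lim H s (H' s)) -> cont_at (fun y => H (sq y)) x.
Proof.
move=> dH; apply: cont_comp; first exact: cont_sq.
exact: rcont_of_deriv (dH _).
Qed.

Lemma cont_w k x : cont_at (fun y => 2 * (y k - z k)) x.
Proof.
apply: cont_scal; apply: (@cont_ext _ (fun y => y k + (-1) * z k)); first by move=> y; ring.
apply: cont_plus; [exact: cont_coord | exact: cont_const].
Qed.

Lemma radial_C2 (O : point n -> Prop) : C2_with O rphi rgrad rhess.
Proof.
split; [|split; [|split; [|split]]].
- apply: cont_on => x; exact: cont_Fsq dF.
- move=> i x _; exact: rphi_partial.
- move=> i; apply: cont_on => x; apply: cont_mult; [exact: cont_Fsq dF1 | exact: cont_w].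
- move=> k l x _; exact: rgrad_partial.
- move=> k l; apply: cont_on => x; apply: cont_plus.
  + apply: cont_mult; last exact: cont_w.
    apply: cont_mult; last exact: cont_w.
    apply: cont_comp; [exact: cont_sq | exact: cF2].
  + apply: cont_mult; [exact: cont_Fsq dF1 | exact: cont_const].
Qed.

Lemma radial_inflap x : sq x <> 0 -> F1 (sq x) <> 0 ->
  gradv rgrad x <> (fun _ => 0) /\ inf_lap rgrad rhess x = 4 * F2 (sq x) * sq x + 2 * F1 (sq x).
Proof.
move=> s0 f0.
set s := sq x in s0 f0 *.
have es : s = \big[Rplus/0]_(k < n) ((x k - z k) * (x k - z k)) by [].
split.
- move=> hg; apply: s0; rewrite es big1 // => k _.
  have := congr1 (fun f => f k) hg; rewrite /gradv /rgrad /= => h.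
  have : x k - z k = 0.
    case: (Rmult_integral _ _ h) => [/f0 []|]; lra.
  by move=> ->; ring.
- rewrite /inf_lap.
  have ed : dot (gradv rgrad x) (gradv rgrad x) = 4 * F1 s * F1 s * s.
    rewrite /dot [X in _ = _ * X]es -sum_scal; apply: eq_bigr => k _; rewrite /gradv /rgrad -/s; ring.
  have en : vnorm (gradv rgrad x) ^ 2 = 4 * F1 s * F1 s * s.
    by rewrite /vnorm pow2_sqrt ?ed //; rewrite -ed; exact: dot_ge0.
  have eq : quadH rhess x (gradv rgrad x) = 16 * F2 s * F1 s * F1 s * s * s + 8 * F1 s * F1 s * F1 s * s.
    rewrite /quadH.
    transitivity (\big[Rplus/0]_(k < n) (16 * F2 s * F1 s * F1 s * s * ((x k - z k) * (x k - z k))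
        + 8 * F1 s * F1 s * F1 s * ((x k - z k) * (x k - z k)))).
      apply: eq_bigr => k _.
      transitivity (\big[Rplus/0]_(l < n) ((16 * F2 s * F1 s * F1 s * ((x k - z k) * (x k - z k))) * ((x l - z l) * (x l - z l))
          + (if k == l then 8 * F1 s * F1 s * F1 s * ((x k - z k) * (x l - z l)) else 0))).
        apply: eq_bigr => l _; rewrite /rhess /gradv /rgrad -/s.
        case: eqP => [<-|_]; ring.
      rewrite sum_split sum_ind sum_scal -es; ring.
    rewrite sum_split !sum_scal -es; ring.
  rewrite en eq; field.
  split => //.
Qed.
End Radial.

Lemma sum_le n (f g : 'I_n -> R) : (forall i, f i <= g i) ->
  \big[Rplus/0]_(i < n) f i <= \big[Rplus/0]_(i < n) g i.
Proof.
move=> H; apply: (big_ind2 (fun a b => a <= b)); [lra| move=> a b c d; lra| move=> i _; exact: H].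
Qed.

Lemma entry_dist n eps : 0 < eps -> exists e, 0 < e /\ forall a b : point n,
  (forall i, Rabs (a i - b i) < e) -> dist a b < eps.
Proof.
move=> He.
set N := \big[Rplus/0]_(i < n) 1.
have N0 : 0 <= N by apply: (big_ind (fun r => 0 <= r)); [lra| move=> ? ?; lra| move=> *; lra].
exists (eps / (N + 1)); split; first by apply: Rdiv_lt_0_compat; lra.
move=> a b H.
set e := eps / (N + 1).
have e0 : 0 < e by apply: Rdiv_lt_0_compat; lra.
rewrite -/e in H.
have hd : dot (vsub a b) (vsub a b) <= e * e * N.
  rewrite /N -sum_scal /dot; apply: sum_le => i; rewrite /vsub.
  have h1 := H i; have h2 := Rabs_pos (a i - b i).
  have -> : (a i - b i) * (a i - b i) = Rabs (a i - b i) * Rabs (a i - b i).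
    rewrite -Rabs_mult Rabs_pos_eq //; exact: Rle_0_sqr.
  nra.
have hN : e * e * N < eps * eps.
  have -> : e * e * N = eps * eps * (N / ((N + 1) * (N + 1))) by rewrite /e; field; lra.
  have : N / ((N + 1) * (N + 1)) < 1.
    apply/(Rmult_lt_reg_r ((N+1)*(N+1))); first nra.
    rewrite /Rdiv Rmult_assoc Rinv_l; nra.
  move=> hq; have := Rmult_lt_compat_l (eps * eps) _ _ ltac:(nra) hq; lra.
rewrite /dist /vnorm -(sqrt_square eps); last lra.
apply: sqrt_lt_1_alt; split; [exact: dot_ge0| lra].
Qed.

Module EVT.
From HB Require Import structures.
From mathcomp Require Import all_boot all_order all_algebra.
From mathcomp Require Import all_classical all_reals all_analysis Rstruct_topology.
Import Order.TTheory GRing.Theory Num.Theory.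
Import numFieldNormedType.Exports.
Local Open Scope classical_set_scope.

Section S.
Variable n : nat.
Definition g (v : 'rV[R]_n) : Defs.point n := fun i => v ord0 i.
Definition h (p : Defs.point n) : 'rV[R]_n := \row_i p i.
Lemma gh p : g (h p) = p.
Proof. by apply: functional_extensionality => i; rewrite /g /h mxE. Qed.

Lemma ball_close (v : 'rV[R]_n) (eps : R) : Rlt 0 eps -> exists e : R, Rlt 0 e /\
  forall w, ball v e w -> Rlt (Defs.dist (g w) (g v)) eps.
Proof.
move=> He; have [e [e0 He']] := entry_dist n He.
exists e; split => // w [_ Hw]; apply: He' => i.
have := Hw ord0 i; rewrite /ball /= => /RltP; rewrite -RabsE /g => hh.
by rewrite -Rabs_Ropp Ropp_minus_distr.
Qed.
Lemma cont_F (z : Defs.point n) : continuous (fun v : 'rV[R]_n => (Defs.dist (g v) z : R^o)).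
Proof.
move=> v; apply/(@pseudometric_normed_Zmodule.cvgrPdist_lt _ R^o _ (nbhs v) _ _ _) => eps /RltP eps0.
have [e [e0 He]] := ball_close v eps0.
apply/nbhs_ballP; exists e; first exact/RltP.
move=> w bw; have := He w bw => hd.
have h1 := pdist_triangle (g w) (g v) z; have h2 := pdist_triangle (g v) (g w) z.
rewrite (pdist_sym (g v) (g w)) in h2.
apply/RltP; rewrite -RabsE -RminusE; apply: Rabs_def1; lra.
Qed.

Lemma evt_ball (z : Defs.point n) (R0 : R) (f : Defs.point n -> R) :
  Rle 0 R0 -> Defs.continuous_on (fun y => Rle (Defs.dist y z) R0) f ->
  exists c, Rle (Defs.dist c z) R0 /\ forall y, Rle (Defs.dist y z) R0 -> Rle (f y) (f c).
Proof.
move=> R0p cf.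
pose A := [set v : 'rV[R]_n | Rle (Defs.dist (g v) z) R0].
have A0 : A !=set0 by exists (h z); rewrite /A /= gh pdist_refl.
have cA : compact A.
  pose B := [set v : 'rV[R]_n | forall i, `[z i - R0, z i + R0]%classic (v ord0 i)].
  have cB : compact B.
    apply: (@rV_compact _ n (fun i => `[z i - R0, z i + R0]%classic)) => i.
    exact: segment_compact.
  apply: (@subclosed_compact _ A B _ cB).
  - have -> : A = (fun v : 'rV[R]_n => Defs.dist (g v) z) @^-1` [set x | x <= R0]%R.
      by apply/seteqP; split => v /= H; apply/RleP.
    apply: preimage_closed; last exact: closed_le.
    move=> v _; exact: cont_F.
  - move=> v Av i; rewrite /= in_itv /=; have := coord_dist (g v) z i.
    rewrite /A /= in Av; move=> hc.
    have h1 := Rle_abs (g v i - z i); have h2 := Rle_abs (- (g v i - z i)).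
    rewrite Rabs_Ropp in h2.
    apply/andP; split; apply/RleP; [change (Rle (z i - R0) (g v i)) | change (Rle (g v i) (z i + R0))]; lra.
have cf' : {within A, continuous (f \o g)}.
  apply/subspace_continuousP => v Av.
  apply/(@pseudometric_normed_Zmodule.cvgrPdist_lt _ R^o _ (within A (nbhs v)) _ _ _) => eps /RltP eps0.
  have [d [d0 Hd]] := cf (g v) Av eps eps0.
  have [e [e0 He]] := ball_close v d0.
  rewrite /within /=; apply/nbhs_ballP; exists e; first exact/RltP.
  move=> w bw Aw.
  change (`|f (g v) - f (g w)| < eps)%R.
  apply/RltP; rewrite -RabsE -RminusE Rabs_minus_sym; apply: Hd; first exact: Aw.
  exact: He.
have [c Ac Hc] := EVT_max_rV A0 cA cf'.
exists (g c); split; first by move: Ac; rewrite inE.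
move=> y Hy; have := Hc (h y); rewrite /= gh => H; apply/RleP; apply: H.
by rewrite inE /A /= gh.
Qed.
End S.
End EVT.

Lemma deriv_affine (H : R -> R) t l A a B :
  derivable_pt_lim H t l -> derivable_pt_lim (fun s => A + a * H s + B * s) t (a * l + B).
Proof.
move=> dH.
have P := derivable_pt_lim_plus _ _ _ _ _
   (derivable_pt_lim_plus _ _ _ _ _ (derivable_pt_lim_const A t) (derivable_pt_lim_scal _ a _ _ dH))
   (derivable_pt_lim_scal id B t _ (derivable_pt_lim_id t)).
apply: (deriv_ext _ _ P).
- by move=> s; rewrite /plus_fct /mult_real_fct /fct_cte /id.
- ring.
Qed.

Lemma rcont_scal (H : R -> R) a t : rcont H t -> rcont (fun s => a * H s) t.
Proof.
move=> cH eps He.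
have [d [d0 Hd]] := cH (eps / (Rabs a + 1)) ltac:(apply: Rdiv_lt_0_compat; have := Rabs_pos a; lra).
exists d; split => // s hs.
rewrite -Rmult_minus_distr_l Rabs_mult.
have := Hd s hs => h1; have := Rabs_pos a => h2; have := Rabs_pos (H s - H t) => h3.
have : Rabs a * Rabs (H s - H t) <= Rabs a * (eps / (Rabs a + 1)) by apply: Rmult_le_compat_l; lra.
have : Rabs a * (eps / (Rabs a + 1)) < eps.
  have -> : Rabs a * (eps / (Rabs a + 1)) = eps * (Rabs a / (Rabs a + 1)) by field; lra.
  have : Rabs a / (Rabs a + 1) < 1.
    apply/(Rmult_lt_reg_r (Rabs a + 1)); first lra.
    rewrite /Rdiv Rmult_assoc Rinv_l; lra.
  move=> hq; have := Rmult_lt_compat_l eps _ _ He hq; lra.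
lra.
Qed.

Definition SubP n (U : point n -> Prop) (u c : point n -> R) : Prop :=
  forall phi grad hess x, C2_with U phi grad hess -> U x ->
    (exists r, 0 < r /\ forall y, U y -> dist y x < r -> u y - phi y <= u x - phi x) ->
    forall m, inf_lap_plus grad hess x m -> - m <= c x.

Lemma dist_sqE n (z y : point n) : dist y z = sqrt (sq z y).
Proof. by []. Qed.

Lemma sq_ge0 n (z y : point n) : 0 <= sq z y.
Proof. exact: dot_ge0. Qed.

Lemma sq_dist n (z y : point n) : sq z y = dist y z * dist y z.
Proof. by rewrite dist_sqE sqrt_sqrt //; exact: sq_ge0. Qed.

Lemma dist0_eq n (x z : point n) : dist x z = 0 -> x = z.
Proof.
move=> h; apply: functional_extensionality => i.
have := coord_dist x z i; rewrite h => h1.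
have h2 := Rle_abs (x i - z i); have h3 := Rle_abs (- (x i - z i)).
rewrite Rabs_Ropp in h3; lra.
Qed.

Lemma cont_on_plus n (K : point n -> Prop) (u q : point n -> R) :
  continuous_on K u -> (forall x, cont_at q x) -> continuous_on K (fun y => u y + q y).
Proof.
move=> cu cq x Kx eps He.
have [d1 [Hd1 H1]] := cu x Kx (eps/2) ltac:(lra); have [d2 [Hd2 H2]] := cq x (eps/2) ltac:(lra).
exists (Rmin d1 d2); split; first by apply: Rmin_glb_lt.
move=> y Ky Hy; have := H1 y Ky (Rlt_le_trans _ _ _ Hy (Rmin_l _ _)).
have := H2 y (Rlt_le_trans _ _ _ Hy (Rmin_r _ _)).
move=> a b; have e : u y + q y - (u x + q x) = (u y - u x) + (q y - q x) by ring.
rewrite e; apply: Rle_lt_trans (Rabs_triang _ _) _; lra.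
Qed.

Lemma core n (U : point n -> Prop) (u c : point n -> R) (z : point n) (Rr b : R) :
  0 < Rr -> 0 <= b -> (forall y, dist y z <= Rr -> U y) ->
  continuous_on (fun y => dist y z <= Rr) u ->
  (forall y, dist y z <= Rr -> u y - u z < 2) ->
  (forall y, dist y z <= Rr -> c y < 2 * b) ->
  SubP U u c ->
  forall y, dist y z <= Rr -> u y - u z <= (2 / Rr + 2 * b * Rr) * dist y z.
Proof.
move=> Rp bp KU cu osc cb sub.
set a := 2 / Rr + 2 * b * Rr.
have ap : 0 < a.
  rewrite /a; have : 0 < 2 / Rr by apply: Rdiv_lt_0_compat; lra.
  nra.
set w := fun y => u y + ((- u z) + (- a) * dist y z + b * (dist y z * dist y z)).
have cw : continuous_on (fun y => dist y z <= Rr) w.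
  apply: cont_on_plus => // x.
  apply: cont_plus; first (apply: cont_plus; [exact: cont_const| apply: cont_scal; exact: cont_dist]).
  apply: cont_scal; apply: cont_mult; exact: cont_dist.
have [x [Kx xmax]] := EVT.evt_ball (Rlt_le _ _ Rp) cw.
case: (Rle_or_lt (w x) 0) => [wx0|wx0].
  move=> y Ky; have := xmax y Ky; rewrite /w => h.
  rewrite /w in wx0.
  have h0 := pdist_ge0 y z.
  have : 0 <= b * (dist y z * dist y z) by apply: Rmult_le_pos => //; nra.
  lra.
exfalso.
have dx0 : 0 < dist x z.
  case: (Rle_lt_or_eq_dec 0 (dist x z) (pdist_ge0 _ _)) => // h0.
  move: wx0; rewrite /w -h0 (dist0_eq (esym h0)); lra.
have dxR : dist x z < Rr.
  case: (Rle_lt_or_eq_dec _ _ Kx) => // h0.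
  move: wx0; rewrite /w h0 => h.
  have hosc := osc x Kx.
  have e : a * Rr = 2 + 2 * b * Rr * Rr by rewrite /a; field; lra.
  have : 0 <= b * (Rr * Rr) by apply: Rmult_le_pos => //; nra.
  nra.
set s0 := sq z x.
have s0E : s0 = dist x z * dist x z by rewrite /s0 sq_dist.
have s0p : 0 < s0 by rewrite s0E; nra.
have sqs0 : sqrt s0 = dist x z by [].
set d := s0 / 2.
have dp : 0 < d by rewrite /d; lra.
have sdp : sqrt d < sqrt s0 by apply: sqrt_lt_1_alt; rewrite /d; lra.
pose F t := u z + a * G d t + (- b) * t.
pose F1 t := - b + a * G1 d t + 0 * t.
pose F2 t := a * G2 d t.
have dF : forall t, derivable_pt_lim F t (F1 t).
  move=> t; apply: (deriv_ext _ _ (deriv_affine (u z) a (- b) (deriv_G dp t))) => //.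
  rewrite /F1; ring.
have dF1 : forall t, derivable_pt_lim F1 t (F2 t).
  move=> t; apply: (deriv_ext _ _ (deriv_affine (- b) a 0 (deriv_G1 dp t))) => //.
  rewrite /F2; ring.
have cF2 : forall t, rcont F2 t by move=> t; apply: rcont_scal; exact: rcont_G2.
have C2 := @radial_C2 n z F F1 F2 dF dF1 cF2 U.
have FE : forall y, d <= sq z y -> rphi z F y = u z + a * dist y z + (- b) * (dist y z * dist y z).
  move=> y hy; rewrite /rphi /F /G pw_r // -sq_dist; done.
have Ux : U x by apply: KU; lra.
have locmax : exists r, 0 < r /\ forall y, U y -> dist y x < r -> u y - rphi z F y <= u x - rphi z F x.
  exists (Rmin (Rr - dist x z) (sqrt s0 - sqrt d)); split.
    by apply: Rmin_glb_lt; lra.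
  move=> y Uy hy.
  have h1 := Rlt_le_trans _ _ _ hy (Rmin_l _ _).
  have h2 := Rlt_le_trans _ _ _ hy (Rmin_r _ _).
  have t1 := pdist_triangle y x z.
  have t2 := pdist_triangle x y z.
  rewrite (pdist_sym x y) in t2.
  have Ky : dist y z <= Rr by lra.
  have hyd : d <= sq z y.
    have : sqrt d <= sqrt (sq z y) by rewrite -dist_sqE; lra.
    move/(sqrt_le_0 _ _ (Rlt_le _ _ dp) (sq_ge0 z y)); done.
  have hxd : d <= sq z x by rewrite -/s0 /d; lra.
  rewrite FE // FE //.
  have := xmax y Ky; rewrite /w; lra.
have F1x : 0 < F1 s0.
  rewrite /F1 /G1 pw_r; last by rewrite /d; lra.
  rewrite /G1r sqs0.
  have : a / (2 * Rr) < a / (2 * dist x z).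
    apply: Rmult_lt_compat_l => //; apply: Rinv_lt_contravar; nra.
  have -> : a / (2 * Rr) = 1 / (Rr * Rr) + b by rewrite /a; field; lra.
  have : 0 < 1 / (Rr * Rr) by apply: Rdiv_lt_0_compat; nra.
  rewrite /Rdiv; lra.
have [gnz infl] := @radial_inflap n z F1 F2 x (ltac:(rewrite -/s0; lra) : sq z x <> 0) (ltac:(rewrite -/s0; lra) : F1 (sq z x) <> 0).
have := sub _ _ _ x C2 Ux locmax (inf_lap (rgrad z F1) (rhess z F1 F2) x).
have ilp : inf_lap_plus (rgrad z F1) (rhess z F1 F2) x (inf_lap (rgrad z F1) (rhess z F1 F2) x).
  by left.
move=> /(_ ilp).
rewrite infl -/s0.
have -> : 4 * F2 s0 * s0 + 2 * F1 s0 = - 2 * b.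
  rewrite /F2 /F1 /G2 /G1 !pw_r; try (rewrite /d; lra).
  rewrite /G2r /G1r.
  have hs := sqrt_sqrt s0 (Rlt_le _ _ s0p).
  have ss : 0 < sqrt s0 by apply: sqrt_lt_R0.
  set r := sqrt s0 in hs ss *. rewrite -hs. field; lra.
have := cb x Kx; lra.
Qed.

Section Neg.
Variable n : nat.

Lemma cont_neg (O : point n -> Prop) f : continuous_on O f -> continuous_on O (fun y => - f y).
Proof.
move=> cf x Ox eps He; have [d [d0 Hd]] := cf x Ox eps He.
exists d; split => // y Oy hy.
have e : - f y - - f x = - (f y - f x) by ring.
rewrite e Rabs_Ropp; exact: Hd.
Qed.

Lemma partial_neg (f : point n -> R) i x l : partial f i x l -> partial (fun y => - f y) i x (- l).
Proof.
move=> H; have := derivable_pt_lim_opp _ _ _ H.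
by apply: deriv_ext => // t; rewrite /opp_fct.
Qed.

Lemma C2_neg (O : point n -> Prop) phi grad hess : C2_with O phi grad hess ->
  C2_with O (fun y => - phi y) (fun i y => - grad i y) (fun k l y => - hess k l y).
Proof.
move=> [c1 [p1 [c2 [p2 c3]]]]; split; [|split; [|split; [|split]]].
- exact: cont_neg.
- move=> i x Ox; exact: partial_neg (p1 i x Ox).
- move=> i; exact: cont_neg.
- move=> k l x Ox; exact: partial_neg (p2 k l x Ox).
- move=> k l; exact: cont_neg.
Qed.

Lemma sum_opp (f : 'I_n -> R) : \big[Rplus/0]_(i < n) (- f i) = - \big[Rplus/0]_(i < n) f i.
Proof.
transitivity (\big[Rplus/0]_(i < n) ((-1) * f i)); first by apply: eq_bigr => i _; ring.
rewrite sum_scal; ring.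
Qed.

Lemma quadH_neg (hess : 'I_n -> 'I_n -> point n -> R) x v w :
  (forall i, w i = - v i) ->
  quadH (fun k l y => - hess k l y) x w = - quadH hess x v.
Proof.
move=> hw; rewrite /quadH -sum_opp; apply: eq_bigr => k _; rewrite -sum_opp.
apply: eq_bigr => l _; rewrite !hw; ring.
Qed.

Lemma quadH_neg1 (hess : 'I_n -> 'I_n -> point n -> R) x v :
  quadH (fun k l y => - hess k l y) x v = - quadH hess x v.
Proof.
rewrite /quadH -sum_opp; apply: eq_bigr => k _; rewrite -sum_opp.
apply: eq_bigr => l _; ring.
Qed.

Lemma inflap_neg grad hess (x : point n) m :
  inf_lap_plus grad hess x m ->
  inf_lap_minus (fun i y => - grad i y) (fun k l y => - hess k l y) x (- m).
Proof.
have eg : gradv (fun i y => - grad i y) x = fun i => - gradv grad x i by [].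
have ed : dot (gradv (fun i y => - grad i y) x) (gradv (fun i y => - grad i y) x) =
          dot (gradv grad x) (gradv grad x).
  by rewrite eg /dot; apply: eq_bigr => i _; ring.
case=> [[nz ->]|[z0 [[v [v1 qv]] hv]]].
- left; split.
  + rewrite eg => h; apply: nz; apply: functional_extensionality => i.
    have := congr1 (fun f => f i) h => /= h'; lra.
  + have hq := @quadH_neg hess x (gradv grad x) (gradv (fun i y => - grad i y) x) (fun i => erefl).
    rewrite /inf_lap /vnorm ed hq; ring.
- right; split.
  + by rewrite eg z0; apply: functional_extensionality => i; ring.
  + split.
    * exists v; split => //; rewrite quadH_neg1 qv; ring.
    * move=> w w1; rewrite quadH_neg1; have := hv w w1; lra.
Qed.
End Neg.

Lemma sub_of_visc n (U : point n -> Prop) u1 u2 (i : bool) :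
  visc_sub U (pair_fun u1 u2) ->
  SubP U (pair_fun u1 u2 i) (fun y => pair_fun u1 u2 (other i) y - pair_fun u1 u2 i y).
Proof.
move=> [_ H] phi grad hess x C2 Ux lm m hm.
have := H i phi grad hess x C2 Ux lm m hm; lra.
Qed.

Lemma sub_of_super n (U : point n -> Prop) u1 u2 (i : bool) :
  visc_super U (pair_fun u1 u2) ->
  SubP U (fun y => - pair_fun u1 u2 i y) (fun y => pair_fun u1 u2 i y - pair_fun u1 u2 (other i) y).
Proof.
move=> [_ H] phi grad hess x C2 Ux [r [r0 lm]] m hm.
have lm' : exists r, 0 < r /\ forall y, U y -> dist y x < r ->
    pair_fun u1 u2 i x - (- phi x) <= pair_fun u1 u2 i y - (- phi y).
  exists r; split => // y Uy hy; have := lm y Uy hy; lra.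
have := H i (fun y => - phi y) (fun i y => - grad i y) (fun k l y => - hess k l y) x (C2_neg C2) Ux lm' (- m) (inflap_neg hm).
lra.
Qed.

Lemma cont_restrict n (S S' : point n -> Prop) f : (forall y, S' y -> S y) ->
  continuous_on S f -> continuous_on S' f.
Proof.
move=> sub cf x Sx eps He; have [d [d0 Hd]] := cf x (sub x Sx) eps He.
exists d; split => // y Sy; exact: Hd (sub y Sy).
Qed.

Lemma lip_one n (U : point n -> Prop) (u v : point n -> R) :
  is_open U -> continuous_on (closure U) u -> continuous_on (closure U) v ->
  SubP U u (fun y => v y - u y) -> SubP U (fun y => - u y) (fun y => u y - v y) ->
  locally_lipschitz U u.
Proof.
move=> Uo cu cv s1 s2 x0 Ux0.
have UC : forall y, U y -> closure U y.
  move=> y Uy r r0; exists y; split => //; rewrite pdist_refl; lra.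
have [R1 [R1p HR1]] := Uo x0 Ux0.
have [d1 [d1p Hd1]] := cu x0 (UC _ Ux0) 1 ltac:(lra).
have [d2 [d2p Hd2]] := cv x0 (UC _ Ux0) 1 ltac:(lra).
set rho := Rmin R1 (Rmin d1 d2) / 4.
have m1 := Rmin_l R1 (Rmin d1 d2).
have m2 := Rmin_r R1 (Rmin d1 d2).
have m3 := Rmin_l d1 d2. have m4 := Rmin_r d1 d2.
have rhop : 0 < rho.
  rewrite /rho; have : 0 < Rmin R1 (Rmin d1 d2) by apply: Rmin_glb_lt => //; apply: Rmin_glb_lt.
  lra.
have rhoR1 : 4 * rho <= R1 by rewrite /rho; lra.
have rhod1 : 4 * rho <= d1 by rewrite /rho; lra.
have rhod2 : 4 * rho <= d2 by rewrite /rho; lra.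
set b := Rabs (v x0 - u x0) + 2.
have bp : 0 <= b by rewrite /b; have := Rabs_pos (v x0 - u x0); lra.
have hb1 := Rle_abs (v x0 - u x0).
have hb2 := Rle_abs (- (v x0 - u x0)). rewrite Rabs_Ropp in hb2.
exists rho, (2 / (2 * rho) + 2 * b * (2 * rho)); split => // y z' Uy Uz byy bzz.
rewrite /ball in byy bzz.
have Kin : forall w, dist w z' <= 2 * rho -> dist w x0 < 4 * rho.
  move=> w hw; have := pdist_triangle w z' x0; lra.
have KU : forall w, dist w z' <= 2 * rho -> U w.
  move=> w hw; apply: HR1; rewrite /ball; have := Kin w hw; lra.
have Ku : forall w, dist w z' <= 2 * rho -> Rabs (u w - u x0) < 1.
  move=> w hw; apply: Hd1; [exact: UC (KU w hw)| have := Kin w hw; lra].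
have Kv : forall w, dist w z' <= 2 * rho -> Rabs (v w - v x0) < 1.
  move=> w hw; apply: Hd2; [exact: UC (KU w hw)| have := Kin w hw; lra].
have Kz : dist z' z' <= 2 * rho by rewrite pdist_refl; lra.
have abs_b : forall a e, Rabs a < e -> - e < a /\ a < e.
  move=> a e h; have := Rle_abs a; have := Rle_abs (- a); rewrite Rabs_Ropp; lra.
have Ky : dist y z' <= 2 * rho.
  have := pdist_triangle y x0 z'; rewrite (pdist_sym x0 z'); lra.
have cK : forall f, continuous_on (closure U) f -> continuous_on (fun w => dist w z' <= 2 * rho) f.
  move=> f cf; apply: (cont_restrict _ cf) => w hw; exact: UC (KU w hw).
have H1 := @core n U u (fun y => v y - u y) z' (2 * rho) b ltac:(lra) bp KU (cK _ cu)
  (fun w hw => let: conj a1 a2 := abs_b _ _ (Ku w hw) in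
               let: conj a3 a4 := abs_b _ _ (Ku z' Kz) in ltac:(lra))
  (fun w hw => let: conj a1 a2 := abs_b _ _ (Ku w hw) in
               let: conj a3 a4 := abs_b _ _ (Kv w hw) in ltac:(rewrite /b; lra))
  s1 y Ky.
have H2 := @core n U (fun y => - u y) (fun y => u y - v y) z' (2 * rho) b ltac:(lra) bp KU
  (cont_neg (cK _ cu))
  (fun w hw => let: conj a1 a2 := abs_b _ _ (Ku w hw) in
               let: conj a3 a4 := abs_b _ _ (Ku z' Kz) in ltac:(lra))
  (fun w hw => let: conj a1 a2 := abs_b _ _ (Ku w hw) in
               let: conj a3 a4 := abs_b _ _ (Kv w hw) in ltac:(rewrite /b; lra))
  s2 y Ky.
apply: Rabs_le; lra.
Qed.

Unset Implicit Arguments.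
Theorem mainTheorem9 (n : nat) (U : point n -> Prop) (u1 u2 : point n -> R) :
  is_domain U -> is_bounded U -> smooth_boundary U ->
  continuous_on (closure U) u1 -> continuous_on (closure U) u2 ->
  visc_solution U (pair_fun u1 u2) ->
  locally_lipschitz U u1 /\ locally_lipschitz U u2.
Proof.
move=> [_ [Uo _]] _ _ c1 c2 [hsub hsup]; split.
- apply: (@lip_one n U u1 u2 Uo c1 c2).
  + exact (@sub_of_visc n U u1 u2 true hsub).
  + exact (@sub_of_super n U u1 u2 true hsup).
- apply: (@lip_one n U u2 u1 Uo c2 c1).
  + exact (@sub_of_visc n U u1 u2 false hsub).
  + exact (@sub_of_super n U u1 u2 false hsup).
Qed.
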